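(* Let $\mathbb{F}$ be a field and $\mathcal{A}$ a znz-pattern with $m\ge2$ nonzero diagonal entries, such that the digraph $D(\mathcal{A})$ has no $k$-cycles with $2\le k\le m-1$. If $\mathcal{A}$ is potentially nilpotent over $\mathbb{F}$, then $\mathbb{F}$ contains all the $m$-th roots of unity, i.e. $x^m-1$ factors into $m$ linear factors over $\mathbb{F}$.
   Context: A znz-pattern is an $n\times n$ matrix with entries in $\{*,0\}$; a realization over $\mathbb{F}$ is a matrix in $M_n(\mathbb{F})$ whose nonzero entries are exactly at the $*$ positions; $\mathcal{A}$ is potentially nilpotent over $\mathbb{F}$ if some realization is nilpotent. The digraph $D(\mathcal{A})$ has vertex set $\{1,\ldots,n\}$ and an arc $(i,j)$ whenever $\mathcal{A}_{i,j}=*$ (arcs $(i,i)$ are loops). A $k$-cycle is a sequence of $k$ distinct vertices $i_1,\ldots,i_k$ with arcs $(i_1,i_2),\ldots,(i_{k-1},i_k),(i_k,i_1)$. *)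

(* Defs.v *)
From HB Require Import structures.
From mathcomp Require Import all_boot all_order all_algebra.
Set Implicit Arguments. Unset Strict Implicit. Unset Printing Implicit Defensive.
Import GRing.Theory.
Local Open Scope ring_scope.

(* A znz-pattern of size n: entry true = "*", false = "0". *)
Definition znz_pattern (n : nat) := 'M[bool]_n.

Definition realization (F : fieldType) (n : nat) (P : znz_pattern n)
  (A : 'M[F]_n) : Prop :=
  forall i j, (A i j != 0) = P i j.

Definition nilpotent_mx (F : fieldType) (n : nat) (A : 'M[F]_n) : Prop :=
  exists k : nat, iter k (mulmx A) 1%:M = 0.

Definition potentially_nilpotent (F : fieldType) (n : nat) (P : znz_pattern n)
  : Prop :=
  exists A : 'M[F]_n, realization P A /\ nilpotent_mx A.

Definition num_nz_diag (n : nat) (P : znz_pattern n) : nat :=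
  #|[pred i : 'I_n | P i i]|.

Definition is_cycle_of (n : nat) (P : znz_pattern n) (c : seq 'I_n) : Prop :=
  match c with
  | [::] => False
  | x :: _ => uniq c /\ path.cycle (fun i j => P i j) c
  end.

Definition has_k_cycle (n : nat) (P : znz_pattern n) (k : nat) : Prop :=
  exists c : seq 'I_n, size c = k /\ is_cycle_of P c.

(* Main.v *)
Require Import Defs.
Set Warnings "-notation-overridden,-ambiguous-paths".
From mathcomp Require Import all_boot all_order all_algebra all_fingroup.
From Stdlib Require Import Lia.
Set Warnings "-notation-overridden,-ambiguous-paths".
Import GRing.Theory.
Local Open Scope ring_scope.
Set Implicit Arguments. Unset Strict Implicit.
Lemma monic_dvdXn (F : fieldType) N (p : {poly F}) :
  p \is monic -> p %| 'X^N -> p = 'X^((size p).-1).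
Proof.
elim: N p => [|N IH] p mp.
  rewrite expr0 dvdp1 => /eqP sp.
  rewrite sp /= expr0 (@size1_polyC _ p) ?sp //.
  by move/monicP: mp; rewrite /lead_coef sp => ->.
have [r0|nr0] := boolP (root p 0).
  move/factor_theorem: r0 => [q pq].
  rewrite polyC0 subr0 in pq.
  have mq : q \is monic by rewrite -(monicMr q (monicX F)) -pq.
  have qn0 : q != 0 by apply: monic_neq0.
  rewrite pq exprSr dvdp_mul2r ?polyX_eq0 // => /(IH _ mq) ->.
  by rewrite -exprSr size_polyXn.
move=> dv.
have cp : coprimep p 'X^(N.+1).
  apply: coprimep_expr; have := coprimep_XsubC p 0.
  by rewrite polyC0 subr0 => ->.
have : p %= 1 by move/coprimepP: cp; apply.
rewrite eqp_monic ?monic1 // => /eqP ->.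
by rewrite size_poly1 expr0.
Qed.

Lemma iter_mulmx (R : comNzRingType) n (A : 'M[R]_n.+1) k :
  iter k (mulmx A) 1%:M = A ^+ k.
Proof. by elim: k => [|k IH] //=; rewrite IH exprS mulmxE. Qed.

Lemma map_mxX (F : fieldType) n (A : 'M[F]_n.+1) k :
  map_mx (@polyC F) (A ^+ k) = (map_mx (@polyC F) A) ^+ k.
Proof.
elim: k => [|k IH]; first by rewrite !expr0 map_mx1.
by rewrite !exprS -!mulmxE map_mxM IH.
Qed.

Lemma char_poly_nil (F : fieldType) n (A : 'M[F]_n.+1) k :
  A ^+ k = 0 -> char_poly A = 'X^(n.+1).
Proof.
move=> Ak.
set A' := map_mx (@polyC F) A.
have cm : GRing.comm ('X%:M : 'M[{poly F}]_n.+1) A'.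
  by rewrite /GRing.comm -!mulmxE scalar_mxC.
have := subrXX_comm k cm.
have -> : A' ^+ k = 0 by rewrite /A' -map_mxX Ak map_mx0.
have sX : forall j, ('X%:M : 'M[{poly F}]_n.+1) ^+ j = ('X ^+ j)%:M.
  elim=> [|j IHj]; first by rewrite !expr0.
  by rewrite !exprS IHj -mulmxE -scalar_mxM.
rewrite subr0 sX.
move/(congr1 determinant); rewrite det_scalar -mulmxE det_mulmx -exprM.
move=> e.
have mc := char_poly_monic A.
have : char_poly A %| 'X^(k * n.+1).
  by rewrite e /char_poly /char_poly_mx dvdp_mulIl.
move/(@monic_dvdXn F _ _ mc) => ->.
by rewrite size_char_poly.
Qed.
Lemma comb n (P : znz_pattern n) (s : 'S_n) m :
  (2 <= m)%N -> (forall k, (2 <= k)%N -> (k <= m.-1)%N -> ~ has_k_cycle P k) ->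
  s != 1%g -> (forall i, s i != i -> P i (s i)) ->
  (m <= #|[pred i | s i != i]|)%N.
Proof.
move=> m2 hk s1 hP.
have [i si] : exists i, s i != i.
  case: (pickP (fun i => s i != i)) => [i hi|h]; first by exists i.
  by case/eqP: s1; apply/permP => x; rewrite perm1; move: (h x) => /negbFE/eqP.
set c := fingraph.orbit s i.
have fix1 : forall x, s x = x -> (fingraph.order s x <= 1)%N.
  move=> x sx; rewrite -size_orbit.
  apply: (@uniq_leq_size _ _ [:: x]); first exact: orbit_uniq.
  move=> y /trajectP [j _ ->]; by rewrite iter_fix // inE.
have cyc : fcycle s c := cycle_orbit (@perm_inj _ s) i.
have uc : uniq c := orbit_uniq s i.
have ic : i \in c := in_orbit s i.
have sc2 : (1 < size c)%N.
  rewrite ltnNge; apply/negP => h.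
  case E: c h => [|y [|z t]] //= _; first by rewrite E in ic.
  move: cyc ic; rewrite E /= inE andbT => /eqP sy /eqP ey.
  by move: si; rewrite ey sy eqxx.
have mov : forall x, x \in c -> s x != x.
  move=> x xc; apply/eqP=> sx; have := fix1 x sx.
  by rewrite (order_cycle cyc uc xc) leqNgt sc2.
have Pc : is_cycle_of P c.
  rewrite /is_cycle_of; case E: c => [|y t]; first by rewrite E in ic.
  rewrite -E; split => //.
  apply: (sub_in_cycle (P := mem c)) cyc; last by apply/allP.
  move=> a b ha hb /= /eqP <-; exact: hP (mov a ha).
have : ~ (size c <= m.-1)%N.
  by move=> h; apply: (hk (size c) sc2 h); exists c.
move/negP; rewrite -ltnNge => lt.
have : (m <= size c)%N by move: m2 lt; case: (m) => [|m0].
move/leq_trans; apply; rewrite cardE.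
apply: uniq_leq_size => // x xc; rewrite mem_enum inE; exact: mov.
Qed.
Lemma decomp (F : fieldType) n (P : znz_pattern n.+1) (A : 'M[F]_n.+1) m :
  realization P A -> (2 <= m)%N ->
  (forall k, (2<=k)%N -> (k <= m.-1)%N -> ~ has_k_cycle P k) ->
  exists2 q, char_poly A = \prod_i ('X - (A i i)%:P) + q
           & (size q <= (n.+1 - m).+1)%N.
Proof.
move=> rA m2 hk.
rewrite /char_poly /determinant (bigD1 1%g) //=; set q := \sum_(s | _) _; exists q.
  congr (_ + _); rewrite odd_perm1 mul1r.
  by apply: eq_bigr => i _; rewrite !mxE perm1 eqxx.
apply: leq_trans {q}(size_sum _ _ _) _; apply/bigmax_leqP=> s nt_s.
have [allP'|nallP] := boolP [forall j, (s j != j) ==> P j (s j)]; last first.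
  move: nallP; rewrite negb_forall => /existsP [j]; rewrite negb_imply => /andP [sj nP].
  rewrite (bigD1 j) //= !mxE eq_sym (negbTE sj) mulr0n sub0r.
  have -> : A j (s j) = 0 by apply/eqP; rewrite -[_ == _]negbK rA (negbTE nP).
  by rewrite polyC0 oppr0 mul0r mulr0 size_poly0.
apply: leq_trans (_ : #|[pred j | s j == j]|.+1 <= _)%N.
  rewrite -sum1_card (@big_mkcond nat) /= size_Msign.
  apply: (@big_ind2 _ _ (fun (p : {poly F}) (k : nat) => (size p <= k.+1)%N)) => [| p k1 q k2 IHp IHq | j _].
  - by rewrite size_poly1.
  - apply: leq_trans (size_polyMleq _ _) _.
    by rewrite -subn1 -addnS leq_subLR addnA leq_add.
  rewrite !mxE eq_sym !inE; case: (s j == j); first by rewrite polyseqXsubC.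
  by rewrite sub0r size_polyN size_polyC leq_b1.
rewrite ltnS.
have hm := @comb _ P s m m2 hk nt_s (fun j sj => implyP (forallP allP' j) sj).
have e := cardC [pred j | s j == j]; rewrite card_ord in e.
have hc : (m <= #|[predC [pred j | s j == j]]|)%N.
  by apply: leq_trans hm _; apply/subset_leq_card/subsetP => j; rewrite !inE.
move: e hc; set a := #|_|; set b := #|_|; move=> e hc.
apply/leP; move/leP: hc; rewrite -plusE in e; rewrite -minusE; lia.
Qed.
Lemma scale_prod (F : fieldType) (d : F) (t : seq F) : d != 0 ->
  (\prod_(a <- t) ('X - a%:P)) \Po (d%:P * 'X) =
  (d ^+ size t)%:P * \prod_(a <- t) ('X - (a / d)%:P).
Proof.
move=> d0; elim: t => [|a t IH]; first by rewrite !big_nil expr0 mulr1 comp_polyC.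
rewrite !big_cons comp_polyM comp_polyB comp_polyX comp_polyC IH.
have h : d%:P * 'X - a%:P = d%:P * ('X - (a / d)%:P).
  by rewrite mulrBr -polyCM [d * _]mulrC divfK.
by rewrite h mulrACA -polyCM -exprS.
Qed.

Lemma final (F : fieldType) (d : F) (t : seq F) c : d != 0 ->
  \prod_(a <- d :: t) ('X - a%:P) = 'X^((size t).+1) + c%:P ->
  \prod_(a <- d :: t) ('X - (a / d)%:P) = 'X^((size t).+1) - 1.
Proof.
move=> d0 e.
have hc : c = - d ^+ (size t).+1.
  have := congr1 (fun p => p.[d]) e.
  rewrite /= big_cons hornerM hornerXsubC subrr mul0r hornerD hornerXn hornerC.
  by move/eqP; rewrite eq_sym addrC addr_eq0 => /eqP.
have := congr1 (fun p => p \Po (d%:P * 'X)) e.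
rewrite /= scale_prod // comp_polyD comp_Xn_poly comp_polyC hc exprMn polyCN rmorphXn.
rewrite [d%:P ^+ _]/= -[X in _ = _ - X]mulr1 -mulrBr.
apply: mulfI; by rewrite expf_neq0 // polyC_eq0.
Qed.

Theorem theorem4p4 (F : fieldType) (n : nat) (P : znz_pattern n) :
  (2 <= num_nz_diag P)%N ->
  (forall k : nat, (2 <= k)%N -> (k <= (num_nz_diag P).-1)%N -> ~ has_k_cycle P k) ->
  potentially_nilpotent F P ->
  exists s : seq F, size s = num_nz_diag P /\
    ('X^(num_nz_diag P) - 1 : {poly F}) = \prod_(a <- s) ('X - a%:P).
Proof.
case: n P => [|n] P.
  move=> h; exfalso; move: h; rewrite /num_nz_diag.
  have := max_card [pred i : 'I_0 | P i i]; rewrite card_ord leqn0 => /eqP ->.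
  by [].
move=> hm hk [A [rA [k nil]]].
rewrite iter_mulmx in nil.
have cp := char_poly_nil nil.
have [q cq sq] := decomp rA hm hk.
move: hm hk sq; rewrite /num_nz_diag.
set D := [pred i : 'I_n.+1 | P i i].
set m := #|D| => hm hk sq.
set ds := [seq A i i | i <- enum D].
have sds : size ds = m by rewrite size_map -cardE.
have hmN : (m <= n.+1)%N by rewrite -[n.+1]card_ord max_card.
set x := (n.+1 - m)%N in sq *.
have nx : n.+1 = (m + x)%N by rewrite subnKC.
have ident : \prod_i ('X - (A i i)%:P) = \prod_(a <- ds) ('X - a%:P) * 'X^x.
  rewrite (bigID D) /= big_map big_enum /=; congr (_ * _).
  transitivity (\prod_(i in [predC D]) ('X : {poly F})).
    apply: eq_big => // i nP.
    have -> : A i i = 0 by apply/eqP; rewrite -[_ == _]negbK rA (negbTE nP).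
    by rewrite polyC0 subr0.
  rewrite prodr_const; congr (_ ^+ _).
  have e := cardC D; rewrite card_ord in e; move: e; rewrite [in X in _ = X]nx -/m => /eqP; rewrite eqn_add2l => /eqP.
  by [].
set Q := \prod_(a <- ds) ('X - a%:P).
have E : 'X^(m + x) = Q * 'X^x + q by rewrite -nx -cp cq ident.
have eqQ : Q = 'X^m + (Q`_0)%:P.
  apply/polyP => j; rewrite coefD coefXn coefC.
  case: j => [|j].
    by rewrite /= (_ : (0 == m) = false) ?add0r //; case: (m) hm.
  have := congr1 (fun p : {poly F} => p`_(j.+1 + x)) E.
  rewrite /= coefXn coefD coefMXn ltnNge leq_addl /= addnK.
  rewrite (@nth_default _ _ q); last by apply: leq_trans sq _; rewrite addSn ltnS leq_addl.
  by rewrite addr0 eqn_add2r addr0 => ->.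
case Eds: ds sds => [|d t] /= sdt; first by move: hm; rewrite -sdt.
have d0 : d != 0.
  have : d \in ds by rewrite Eds inE eqxx.
  case/mapP => i; rewrite mem_enum inE => Pi ->; by rewrite rA.
exists [seq a / d | a <- d :: t]; split; first by rewrite size_map /= sdt.
rewrite big_map; symmetry; rewrite -sdt; apply: final => //.
by rewrite -Eds sdt -/Q; exact: eqQ.
Qed.
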